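(* Let $K$ be an arbitrary field, $P=K[t][[x_1,\dots,x_s]]$, and $M$ a finitely generated $P$-module. For $t_0\in K$ put $M(t_0):=M\otimes_{K[t]}K[t]/\langle t-t_0\rangle\cong M/\langle t-t_0\rangle M$. Then for every $o\in K$ there is a Zariski open neighborhood $U\subset\mathbb A^1_K=K$ of $o$ such that $\dim_K M(t_0)\le\dim_K M(o)$ for all $t_0\in U$.
   Context: $K[t][[x_1,\dots,x_s]]$ denotes formal power series in $x_1,\dots,x_s$ with coefficients in the polynomial ring $K[t]$. Dimensions may be infinite (the statement is vacuous when $\dim_K M(o)=\infty$). *)

(* Defs.v *)
From HB Require Import structures.
From mathcomp Require Import all_boot all_order all_algebra.
Set Implicit Arguments. Unset Strict Implicit. Unset Printing Implicit Defensive.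
Import Order.TTheory GRing.Theory Num.Theory.
Local Open Scope ring_scope.

(* Monomials x^a in s variables: exponent vectors a : 'I_s -> nat. *)
Definition mon (s : nat) := {ffun 'I_s -> nat}.

(* P = K[t][[x_1,...,x_s]] : a formal power series is its coefficient
   function, coefficients in K[t] = {poly K} (t is 'X). *)
Definition mps (K : fieldType) (s : nat) := mon s -> {poly K}.

Section MPS.
Variables (K : fieldType) (s : nat).

Definition mps_add (f g : mps K s) : mps K s := fun a => f a + g a.
Definition mps_zero : mps K s := fun _ => 0.

(* Cauchy product: (fg)_a = sum_{b <= a} f_b g_{a-b}; b ranges over
   exponent vectors bounded componentwise by a. *)
Definition mps_mul (f g : mps K s) : mps K s := fun a =>
  \sum_(b : {ffun 'I_s -> 'I_((\sum_(i < s) a i)%N).+1}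
         | [forall i, (b i <= a i)%N])
     f [ffun i => nat_of_ord (b i)] * g [ffun i => (a i - b i)%N].

Definition mps_polyscale (c : {poly K}) (f : mps K s) : mps K s :=
  fun a => c * f a.
End MPS.

Definition vadd (K : fieldType) s n (u v : 'I_n -> mps K s) : 'I_n -> mps K s :=
  fun i => mps_add (u i) (v i).
Definition vzero (K : fieldType) s n : 'I_n -> mps K s := fun _ => @mps_zero K s.
Definition vscale (K : fieldType) s n (p : mps K s) (u : 'I_n -> mps K s)
  : 'I_n -> mps K s := fun i => mps_mul p (u i).
Definition vpolyscale (K : fieldType) s n (c : {poly K}) (u : 'I_n -> mps K s)
  : 'I_n -> mps K s := fun i => mps_polyscale c (u i).

(* N is a P-submodule of P^n.  Every finitely generated P-module M is
   isomorphic to P^n / N for some n and some submodule N. *)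
Definition is_submodule (K : fieldType) s n (N : ('I_n -> mps K s) -> Prop) :=
  [/\ N (@vzero K s n),
      (forall u v, N u -> N v -> N (vadd u v)) &
      (forall p u, N u -> N (vscale p u))].

(* Membership in N + (t - t0) P^n, the kernel of P^n ->> M(t0),
   where M = P^n / N and M(t0) = M / (t - t0) M. *)
Definition in_fiber_kernel (K : fieldType) s n (N : ('I_n -> mps K s) -> Prop)
  (t0 : K) (w : 'I_n -> mps K s) : Prop :=
  exists u v, N u /\ w = vadd u (vpolyscale ('X - t0%:P) v).

(* dim_K M(t0) <= d : M(t0) is spanned over K by d elements. *)
Definition dimK_fiber_le (K : fieldType) s n (N : ('I_n -> mps K s) -> Prop)
  (t0 : K) (d : nat) : Prop :=
  exists e : 'I_d -> ('I_n -> mps K s),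
    forall w : 'I_n -> mps K s, exists c : 'I_d -> K,
      in_fiber_kernel N t0
        (vadd w (vpolyscale (-1) (\big[@vadd K s n/@vzero K s n]_(j < d)
                                     vpolyscale (c j)%:P (e j)))).

(* Zariski open subsets of the affine line A^1_K = K: empty or cofinite. *)
Definition zariski_open_A1 (K : fieldType) (U : K -> Prop) : Prop :=
  (forall x, ~ U x) \/ exists S : seq K, forall x, U x <-> x \notin S.

(* Main.v *)
Require Import Defs.
From HB Require Import structures.
From mathcomp Require Import all_boot all_order all_algebra.
From mathcomp Require Import boolp.
From mathcomp Require Import zify ring.
Set Implicit Arguments. Unset Strict Implicit. Unset Printing Implicit Defensive.
Import GRing.Theory.
Local Open Scope ring_scope.

Section Mon.
Variable s : nat.
Implicit Types a b c : mon s.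
Definition mdeg a := (\sum_(i < s) a i)%N.
Definition mle b a := [forall i, (b i <= a i)%N].
Definition madd a b : mon s := [ffun i => (a i + b i)%N].
Definition msub a b : mon s := [ffun i => (a i - b i)%N].
Definition m0 : mon s := [ffun => 0%N].
Definition ofb k (b : {ffun 'I_s -> 'I_k}) : mon s := [ffun i => nat_of_ord (b i)].
Definition lowers a : seq (mon s) :=
  map (@ofb (mdeg a).+1)
   (filter (fun x : {ffun 'I_s -> 'I_(mdeg a).+1} => [forall i, (x i <= a i)%N])
     (enum {ffun 'I_s -> 'I_(mdeg a).+1})).

Lemma mleP b a : reflect (forall i, (b i <= a i)%N) (mle b a).
Proof. exact: forallP. Qed.

Lemma le_mdeg a i : (a i <= mdeg a)%N.
Proof. by rewrite /mdeg (bigD1 i) //= leq_addr. Qed.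

Lemma ofb_inj k : injective (@ofb k).
Proof.
move=> b1 b2 /ffunP H; apply/ffunP=> i; apply/val_inj.
by have := H i; rewrite !ffunE.
Qed.

Lemma uniq_lowers a : uniq (lowers a).
Proof. by rewrite (map_inj_uniq (@ofb_inj _)) filter_uniq // enum_uniq. Qed.

Lemma mem_lowers a b : (b \in lowers a) = mle b a.
Proof.
apply/idP/idP.
  case/mapP=> b' ; rewrite mem_filter => /andP[/forallP H _] ->.
  by apply/forallP=> i; rewrite ffunE.
move=> /forallP H; apply/mapP.
exists [ffun i => (inord (b i) : 'I_(mdeg a).+1)].
  rewrite mem_filter mem_enum andbT; apply/forallP=> i; rewrite ffunE inordK //.
  by rewrite ltnS (leq_trans (H i)) // le_mdeg.
apply/ffunP=> i; rewrite !ffunE inordK //.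
by rewrite ltnS (leq_trans (H i)) // le_mdeg.
Qed.

Lemma big_lowers (R : Type) (idx : R) (op : Monoid.com_law idx) a (r : seq (mon s)) F :
  uniq r -> (forall b, (b \in r) = mle b a) ->
  \big[op/idx]_(b <- r) F b = \big[op/idx]_(b <- lowers a) F b.
Proof.
move=> ur mr; apply: perm_big; apply: uniq_perm=> //; first exact: uniq_lowers.
by move=> b; rewrite mr mem_lowers.
Qed.

Lemma msubK a b : mle b a -> madd b (msub a b) = a.
Proof. move/mleP=> H; apply/ffunP=> i; rewrite !ffunE; have := H i; move: (a i) (b i) => x y; lia. Qed.
Lemma maddK a b : msub (madd a b) a = b.
Proof. by apply/ffunP=> i; rewrite !ffunE; move: (a i) (b i) => x y; lia. Qed.
Lemma msubKr a b : mle b a -> msub a (msub a b) = b.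
Proof. move/mleP=> H; apply/ffunP=> i; rewrite !ffunE; have := H i; move: (a i) (b i) => x y; lia. Qed.
Lemma mle_sub a b : mle (msub a b) a.
Proof. by apply/mleP=> i; rewrite !ffunE; move: (a i) (b i) => x y; lia. Qed.
Lemma mle0 a : mle m0 a.
Proof. by apply/mleP=> i; rewrite !ffunE. Qed.
Lemma msub0 a : msub a m0 = a.
Proof. by apply/ffunP=> i; rewrite !ffunE subn0. Qed.
Lemma mle_trans a b c : mle a b -> mle b c -> mle a c.
Proof. by move=> /mleP H1 /mleP H2; apply/mleP=> i; exact: leq_trans (H1 i) (H2 i). Qed.
End Mon.

Definition ser (A : Type) (s : nat) := mon s -> A.

Section Ser.
Variables (A : comNzRingType) (s : nat).
Implicit Types (f g h : ser A s) (a b c e : mon s).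

Definition conv f g : ser A s := fun a => \sum_(b <- lowers a) f b * g (msub a b).
Definition sone : ser A s := fun a => if a == m0 s then 1 else 0.
Definition szero : ser A s := fun _ => 0.
Definition sadd f g : ser A s := fun a => f a + g a.
Definition sopp f : ser A s := fun a => - f a.

Lemma msub_inj a : {in lowers a &, injective (msub a)}.
Proof.
move=> b c; rewrite !mem_lowers => hb hc E.
by rewrite -(msubKr hb) E msubKr.
Qed.

Lemma conv_comm f g : conv f g = conv g f.
Proof.
apply: funext=> a; rewrite /conv.
rewrite -(@big_lowers s _ _ _ a (map (msub a) (lowers a))); last first.
- move=> b; apply/mapP/idP.
    by case=> c _ ->; apply: mle_sub.
  by move=> hb; exists (msub a b); rewrite ?mem_lowers ?mle_sub ?msubKr.
- by rewrite map_inj_in_uniq ?uniq_lowers //; apply: msub_inj.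
rewrite big_map; apply: eq_big_seq=> b; rewrite mem_lowers=> hb.
by rewrite msubKr // mulrC.
Qed.

Lemma conv_assoc f g h : conv (conv f g) h = conv f (conv g h).
Proof.
apply: funext=> a; rewrite /conv.
have E1 : forall b, b \in lowers a ->
   (\sum_(c <- lowers b) f c * g (msub b c)) * h (msub a b) =
   \sum_(c <- lowers a | mle c b) f c * g (msub b c) * h (msub a b).
  move=> b; rewrite mem_lowers=> hb.
  rewrite big_distrl /= -[RHS]big_filter; symmetry.
  apply: (@big_lowers s _ _ _ b); first by rewrite filter_uniq ?uniq_lowers.
  move=> c; rewrite mem_filter mem_lowers; apply/andP/idP; first by case.
  by move=> hc; split=> //; apply: mle_trans hc hb.
rewrite (eq_big_seq _ E1) /=.
rewrite (exchange_big_dep predT) //=.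
apply: eq_big_seq=> c; rewrite mem_lowers=> hc.
rewrite big_distrr /=.
rewrite -(@big_lowers s _ _ _ (msub a c)
           (map (fun b => msub b c) [seq b <- lowers a | mle c b])); last first.
- move=> e; apply/mapP/idP.
    case=> b; rewrite mem_filter mem_lowers=> /andP[/mleP h1 /mleP h2] ->.
    apply/mleP=> i; rewrite !ffunE; have:= h1 i; have := h2 i.
    move: (a i) (b i) (c i) => x y z; lia.
  move=> /mleP he; exists (madd c e).
    rewrite mem_filter mem_lowers; apply/andP; split; apply/mleP=> i; rewrite !ffunE.
      by move: (c i) (e i) => x y; lia.
    move: (he i) (hc); rewrite !ffunE => h1 /mleP /(_ i).
    by move: (a i) (c i) (e i) h1 => x y z; lia.
  by rewrite maddK.
- rewrite map_inj_in_uniq ?filter_uniq ?uniq_lowers //.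
  move=> b1 b2; rewrite !mem_filter => /andP[h1 _] /andP[h2 _] E.
  by rewrite -(msubK h1) E msubK.
rewrite big_map big_filter [LHS]big_seq_cond [RHS]big_seq_cond; apply: eq_bigr=> b /andP[].
rewrite mem_lowers=> hb hcb.
rewrite mulrA; congr (_ * _ * h _).
apply/ffunP=> i; rewrite !ffunE.
move: (hb) (hcb) => /mleP /(_ i) h1 /mleP /(_ i) h2.
by move: (a i) (b i) (c i) h1 h2 => x y z; lia.
Qed.

Lemma conv1 f : conv sone f = f.
Proof.
apply: funext=> a; rewrite /conv (bigD1_seq (m0 s)) ?uniq_lowers ?mem_lowers ?mle0 //=.
rewrite /sone eqxx mul1r msub0 big1_seq ?addr0 //.
by move=> b /andP[/negbTE -> _]; rewrite mul0r.
Qed.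

Lemma convDl f g h : conv (sadd f g) h = sadd (conv f h) (conv g h).
Proof.
apply: funext=> a; rewrite /conv /sadd -big_split /=.
by apply: eq_bigr=> b _; rewrite mulrDl.
Qed.

Lemma sone_neq0 : sone != szero.
Proof.
apply/eqP=> /(congr1 (fun F => F (m0 s))); rewrite /sone /szero eqxx.
by move/eqP; rewrite oner_eq0.
Qed.

HB.instance Definition _ := gen_eqMixin (ser A s).
HB.instance Definition _ := gen_choiceMixin (ser A s).

Lemma saddA : associative sadd.
Proof. by move=> f g h; apply: funext=> a; rewrite /sadd addrA. Qed.
Lemma saddC : commutative sadd.
Proof. by move=> f g; apply: funext=> a; rewrite /sadd addrC. Qed.
Lemma sadd0 : left_id szero sadd.
Proof. by move=> f; apply: funext=> a; rewrite /sadd /szero add0r. Qed.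
Lemma saddN : left_inverse szero sopp sadd.
Proof. by move=> f; apply: funext=> a; rewrite /sadd /szero /sopp addNr. Qed.

HB.instance Definition _ := GRing.isZmodule.Build (ser A s) saddA saddC sadd0 saddN.
HB.instance Definition _ := @GRing.Zmodule_isComNzRing.Build (ser A s) sone conv
  (fun f g h => esym (conv_assoc f g h)) (@conv_comm) (@conv1) (@convDl) sone_neq0.

Lemma serD f g a : (f + g) a = f a + g a. Proof. by []. Qed.
Lemma serN f a : (- f) a = - f a. Proof. by []. Qed.
Lemma ser0 a : (0 : ser A s) a = 0. Proof. by []. Qed.
Lemma serB f g a : (f - g) a = f a - g a. Proof. by []. Qed.
Lemma serM f g a : (f * g) a = \sum_(b <- lowers a) f b * g (msub a b). Proof. by []. Qed.
Lemma ser1 a : (1 : ser A s) a = if a == m0 s then 1 else 0. Proof. by []. Qed.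
Lemma ser_sum (I : Type) (r : seq I) (P : pred I) (F : I -> ser A s) a :
  (\sum_(i <- r | P i) F i) a = \sum_(i <- r | P i) F i a.
Proof. by elim/big_rec2: _ => // i y1 y2 _ <-. Qed.

End Ser.

Section MonMore.
Variable s : nat.
Implicit Types a b c : mon s.
Lemma msubxx a : msub a a = m0 s.
Proof. by apply/ffunP=> i; rewrite !ffunE subnn. Qed.
Lemma mdeg_eq0 a : mdeg a = 0%N -> a = m0 s.
Proof. move=> h; apply/ffunP=> i; rewrite !ffunE; have := le_mdeg a i; rewrite h leqn0; move/eqP; apply. Qed.
Lemma mdegD a b : mdeg (madd a b) = (mdeg a + mdeg b)%N.
Proof. by rewrite /mdeg -big_split; apply: eq_bigr=> i _; rewrite ffunE. Qed.
Lemma mdeg_lt b a : mle b a -> b != a -> (mdeg b < mdeg a)%N.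
Proof.
move=> hb hne; rewrite -(msubK hb) mdegD -[X in (X < _)%N]addn0 ltn_add2l lt0n.
apply/negP=> /eqP/mdeg_eq0 E; move/eqP: hne; apply.
by rewrite -(msubK hb) E; apply/ffunP=> i; rewrite !ffunE addn0.
Qed.
Lemma mle_m0 b : mle b (m0 s) -> b = m0 s.
Proof. by move/mleP=> H; apply/ffunP=> i; have := H i; rewrite !ffunE; case: (b i). Qed.
Lemma big_lowers0 (R : Type) (idx : R) (op : Monoid.com_law idx) F :
  \big[op/idx]_(b <- lowers (m0 s)) F b = F (m0 s).
Proof.
rewrite -(@big_lowers s _ _ _ (m0 s) [:: m0 s]) ?big_seq1 //.
move=> b; rewrite inE; apply/eqP/idP; first by move->; exact: mle0.
by move/mleP=> H; apply/ffunP=> i; have := H i; rewrite !ffunE; case: (b i).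
Qed.
End MonMore.

Section SerMore.
Variables (A : comNzRingType) (s : nat).
Implicit Types (f g h : ser A s) (a b c : mon s).

Definition ct (f : ser A s) : A := f (m0 s).
Lemma ct_is_zmod : zmod_morphism ct. Proof. by []. Qed.
Lemma ct_is_mon : monoid_morphism ct.
Proof.
split; first by rewrite /ct ser1 eqxx.
by move=> f g; rewrite /ct serM big_lowers0 msubxx.
Qed.
HB.instance Definition _ := GRing.isZmodMorphism.Build (ser A s) A ct ct_is_zmod.
HB.instance Definition _ := GRing.isMonoidMorphism.Build (ser A s) A ct ct_is_mon.

Definition xm b : ser A s := fun a => if a == b then 1 else 0.
Definition cst (x : A) : ser A s := fun a => if a == m0 s then x else 0.

Lemma mul_xm f b a : (xm b * f) a = if mle b a then f (msub a b) else 0.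
Proof.
rewrite serM; case: ifP=> hb.
  rewrite (bigD1_seq b) ?uniq_lowers ?mem_lowers //= /xm eqxx mul1r big1_seq ?addr0 //.
  by move=> c /andP[/negbTE -> _]; rewrite mul0r.
rewrite big1_seq // => c; rewrite mem_lowers /xm; case: eqP=> [->|]; last by rewrite mul0r.
by rewrite hb.
Qed.

Lemma mul_cst f x a : (cst x * f) a = x * f a.
Proof.
rewrite serM (bigD1_seq (m0 s)) ?uniq_lowers ?mem_lowers ?mle0 //= /cst eqxx msub0.
by rewrite big1_seq ?addr0 // => c /andP[/negbTE -> _]; rewrite mul0r.
Qed.

Lemma cst1 : cst 1 = 1. Proof. by []. Qed.
End SerMore.

Section Inv.
Variables (K : fieldType) (s : nat) (f : ser K s).
Hypothesis f0 : f (m0 s) != 0.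
Let u := f (m0 s).
Fixpoint gi (k : nat) (a : mon s) : K :=
  if k is k'.+1 then
    (if a == m0 s then u^-1
     else - u^-1 * \sum_(b <- lowers a | b != a) f (msub a b) * gi k' b)
  else 0.
Definition ginv : ser K s := fun a => gi (mdeg a).+1 a.

Lemma giE k a : (mdeg a < k)%N -> gi k a = ginv a.
Proof.
elim/ltn_ind: k a => k IH a ha; rewrite /ginv.
case: k IH ha => // k IH ha /=.
case: eqP=> // _; congr (- _ * _).
rewrite [LHS]big_seq_cond [RHS]big_seq_cond; apply: eq_bigr=> b /andP[].
rewrite mem_lowers=> hb hne.
have hlt := mdeg_lt hb hne.
rewrite IH //; last by rewrite (leq_trans hlt).
case E: (mdeg a) hlt => // [m] hlt.
by rewrite IH //; lia.
Qed.

Lemma ginvK : ginv * f = 1.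
Proof.
apply: funext=> a; rewrite serM (bigD1_seq a) ?uniq_lowers ?mem_lowers //; last first.
  by apply/mleP.
rewrite /= msubxx ser1.
rewrite {1}/ginv /=; case: eqP=> [->|na].
  rewrite big1_seq ?addr0; first by rewrite mulVf.
  by move=> b /andP[/eqP hne]; rewrite mem_lowers=> /mle_m0.
have E : \sum_(b <- lowers a | b != a) ginv b * f (msub a b) =
          \sum_(b <- lowers a | b != a) f (msub a b) * gi (mdeg a) b.
  rewrite [LHS]big_seq_cond [RHS]big_seq_cond; apply: eq_bigr=> b /andP[].
  by rewrite mem_lowers=> hb hne; rewrite mulrC giE // mdeg_lt.
rewrite E -/u; move: (\sum_(b <- _ | _) _) => S.
by field.
Qed.
End Inv.

Lemma nakayama (K : fieldType) s n (S : 'rV[ser K s]_n -> Prop)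
  (S0 : S 0) (SD : forall x y, S x -> S y -> S (x + y))
  (SZ : forall r x, S x -> S (r *: x))
  (I : finType) (h nu : I -> 'rV[ser K s]_n) (r : I -> I -> ser K s) :
  (forall a b, ct (r a b) = 0) -> (forall a, S (nu a)) ->
  (forall a, h a = nu a + \sum_b r a b *: h b) -> forall a, S (h a).
Proof.
move=> r0 Snu hE.
have Ssum : forall (J : Type) (q : seq J) (F : J -> 'rV_n), (forall j, S (F j)) ->
    S (\sum_(j <- q) F j).
  by move=> J q F HF; elim/big_ind: _ => //.
pose m := #|I|.
pose H : 'M[ser K s]_(m, n) := \matrix_(k, j) h (enum_val k) 0 j.
pose Nu : 'M[ser K s]_(m, n) := \matrix_(k, j) nu (enum_val k) 0 j.
pose Rm : 'M[ser K s]_m := \matrix_(k, k') r (enum_val k) (enum_val k').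
have rowH k : row k H = h (enum_val k) by apply/rowP=> j; rewrite !mxE.
have rowNu k : row k Nu = nu (enum_val k) by apply/rowP=> j; rewrite !mxE.
have HE : H = Nu + Rm *m H.
  apply/matrixP=> k j; rewrite !mxE {1}hE !mxE summxE.
  congr (_ + _).
  rewrite [LHS](reindex (fun k : 'I_m => enum_val k)); last by apply: onW_bij; apply: enum_val_bij.
  by apply: eq_bigr=> k' _; rewrite !mxE.
pose A := 1%:M - Rm.
have AH : A *m H = Nu by rewrite /A mulmxBl mul1mx {1}HE addrK.
pose D := \det A.
have cD : ct D = 1.
  rewrite /D -det_map_mx /A map_mxB map_mx1.
  have -> : map_mx (@ct K s) Rm = 0 by apply/matrixP=> k k'; rewrite !mxE r0.
  by rewrite subr0 det1.
have DH : D *: H = \adj A *m Nu by rewrite -AH mulmxA mul_adj_mx mul_scalar_mx.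
have Srow : forall k, S (row k (D *: H)).
  move=> k; rewrite DH row_mul mulmx_sum_row; apply: Ssum=> k'.
  by apply: SZ; rewrite rowNu.
have Hk : forall k, S (row k H).
  move=> k; have -> : row k H = ginv D *: row k (D *: H).
    by rewrite linearZ /= scalerA ginvK ?scale1r //; rewrite -/(ct D) cD oner_neq0.
  exact: SZ.
by move=> a; rewrite -(enum_rankK a) -rowH.
Qed.

Section Dec.
Variable s : nat.
Implicit Types a b c : mon s.

Lemma mdeg_le b a : mle b a -> (mdeg b <= mdeg a)%N.
Proof. by move/mleP=> H; apply: leq_sum=> i _; apply: H. Qed.

Lemma exists_sub j a : (j <= mdeg a)%N -> exists b, mle b a /\ mdeg b = j.
Proof.
elim: j=> [|j IH] hj.
  by exists (m0 s); split; [exact: mle0 | rewrite /mdeg big1 // => i _; rewrite ffunE].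
have [b [hb db]] := IH (ltnW hj).
have : exists i, (b i < a i)%N.
  apply/existsP; apply: contraT; rewrite negb_exists=> /forallP H.
  have : (mdeg a <= mdeg b)%N by apply: leq_sum=> i _; have := H i; rewrite -leqNgt.
  by rewrite db leqNgt hj.
case=> i0 hi0.
exists [ffun i => if i == i0 then (b i).+1 else b i]; split.
  apply/mleP=> i; rewrite ffunE; case: eqP=> [->//|_]; exact: (mleP _ _ hb).
rewrite /mdeg (bigD1 i0) //= ffunE eqxx -db /mdeg [X in _ = X.+1](bigD1 i0) //= addSn.
congr (_ .+1); congr (_ + _)%N.
by apply: eq_bigr=> i /negbTE hi; rewrite ffunE hi.
Qed.

Definition boxof (j : nat) (a : mon s) : {ffun 'I_s -> 'I_j.+1} := [ffun i => inord (a i)].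
Lemma ofb_boxof j a : (forall i, a i <= j)%N -> ofb (boxof j a) = a.
Proof. by move=> H; apply/ffunP=> i; rewrite !ffunE inordK // ltnS. Qed.
Lemma boxof_ofb j (b : {ffun 'I_s -> 'I_j.+1}) : boxof j (ofb b) = b.
Proof. by apply/ffunP=> i; rewrite !ffunE; apply: val_inj; rewrite /= inordK. Qed.
End Dec.

Lemma sum_pair (R : zmodType) (I J : finType) (F : I * J -> R) :
  \sum_p F p = \sum_i \sum_j F (i, j).
Proof. by rewrite pair_bigA; apply: eq_bigr=> -[]. Qed.

Section Dec2.
Variables (K : fieldType) (s n : nat).
Definition inm (j : nat) (v : 'rV[ser K s]_n) := forall i a, (mdeg a < j)%N -> v 0 i a = 0.
Definition hm (j : nat) (p : 'I_n * {ffun 'I_s -> 'I_j.+1}) : 'rV[ser K s]_n :=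
  if mdeg (ofb p.2) == j then xm K (ofb p.2) *: delta_mx 0 p.1 else 0.

Lemma decomp j e (v : 'rV[ser K s]_n) : inm (j + e) v ->
  exists q : 'I_n * {ffun 'I_s -> 'I_j.+1} -> ser K s,
    (forall p c, (mdeg c < e)%N -> q p c = 0) /\ v = \sum_p q p *: hm p.
Proof.
move=> hv.
have Hc : forall a : mon s, exists b : mon s, (j <= mdeg a)%N -> mle b a /\ mdeg b = j.
  move=> a; case: (leqP j (mdeg a))=> ha; first by have [b hb] := exists_sub ha; exists b.
  by exists a.
have [pk hpk] := boolp.choice Hc.
exists (fun p c => if (mdeg (ofb p.2) == j) && (pk (madd (ofb p.2) c) == ofb p.2)
                  then v 0 p.1 (madd (ofb p.2) c) else 0); split.
  move=> [i b] c hc /=; case: ifP=> // /andP[/eqP hb _]; apply: hv.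
  by rewrite mdegD hb ltn_add2l.
apply/rowP=> i'; apply: funext=> a.
rewrite summxE ser_sum sum_pair /=.
rewrite (bigD1 i') //= [X in _ = _ + X]big1 ?addr0; last first.
  move=> i /negbTE hi; apply: big1 => b _.
  rewrite !mxE /hm /=; case: ifP=> _; last by rewrite mxE mulr0.
  by rewrite mxE /delta_mx mxE eqxx eq_sym hi /= !mulr0.

have E' : forall b : {ffun 'I_s -> 'I_j.+1},
   (((fun c : mon s => if (mdeg (ofb b) == j) && (pk (madd (ofb b) c) == ofb b)
                  then v 0 i' (madd (ofb b) c) else 0) : ser K s) *: hm (i', b)) 0 i' a =
   if [&& mdeg (ofb b) == j, mle (ofb b) a & pk a == ofb b] then v 0 i' a else 0.
  move=> b; rewrite /hm /=; case: (boolP (mdeg (ofb b) == j))=> hb /=; last first.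
    by rewrite scaler0 mxE ser0.
  rewrite mxE /delta_mx !mxE !eqxx /= mulr1 mulrC mul_xm.
  by case: ifP=> // hle; rewrite msubK.
rewrite (eq_bigr _ (fun b _ => E' b)) {E'}.
case: (leqP j (mdeg a))=> ha.
  have [h1 h2] := hpk a ha.
  have hbx : forall i, (pk a i <= j)%N by move=> i; rewrite -h2 le_mdeg.
  rewrite (bigD1 (boxof j (pk a))) //= ofb_boxof // h2 eqxx h1 eqxx /=.
  rewrite big1 ?addr0 // => b hb; case: ifP=> // /and3P[_ _ /eqP E].
  by move: hb; rewrite E boxof_ofb eqxx.
rewrite big1; first by rewrite hv //; apply: leq_trans ha (leq_addr _ _).
move=> b _; case: ifP=> // /and3P[/eqP hb hle _].
by have := mdeg_le hle; rewrite hb leqNgt ha.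
Qed.
End Dec2.

Lemma span_family (F : fieldType) L (P : 'rV[F]_L -> Prop) :
  exists k (B : 'M[F]_(k, L)), [/\ forall r, P (row r B), row_free B &
     forall v, P v -> (v <= B)%MS].
Proof.
apply: contrapT=> Hn.
have ext : forall k (B : 'M[F]_(k, L)), (forall r, P (row r B)) -> row_free B ->
    exists B' : 'M[F]_(k + 1, L), (forall r, P (row r B')) /\ row_free B'.
  move=> k B HB fB.
  have [v [Pv nv]] : exists v, P v /\ ~ (v <= B)%MS.
    apply: contrapT=> Hv; apply: Hn; exists k, B; split=> // v Pv.
    by apply: contrapT=> nv; apply: Hv; exists v.
  exists (col_mx B v : 'M_(k + 1, L)); split.
    move=> r; rewrite -(splitK r); case: (split r)=> r' /=; first by rewrite rowKu.
    rewrite rowKd; suff -> : row r' v = v by [].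
    by apply/rowP=> j; rewrite !mxE (ord1 r').
  rewrite /row_free eqn_leq rank_leq_row /=.
  have lt : (B < B + v)%MS.
    rewrite ltmxE addsmxSl /=; apply/negP=> h; apply: nv.
    exact: submx_trans (addsmxSr B v) h.
  have := rank_ltmx lt; rewrite (eqmx_rank (introT eqmxP (addsmxE B v))).
  by move=> h; apply: leq_trans h; rewrite (eqP fB) addn1.
have : forall k, exists B : 'M[F]_(k, L), (forall r, P (row r B)) /\ row_free B.
  elim=> [|k [B [HB fB]]]; last by rewrite -addn1; exact: ext.
  exists 0; split; first by case.
  by rewrite /row_free eqn_leq rank_leq_row.
move=> /(_ L.+1) [B [_ fB]].
by move: (rank_leq_col B); move: fB; rewrite /row_free => /eqP ->; rewrite ltnn.
Qed.

Lemma compl_rows (F : fieldType) L k (B : 'M[F]_(k, L)) d :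
  (L <= \rank B + d)%N -> exists E : 'M[F]_(d, L), forall v : 'rV_L, (v <= B + E)%MS.
Proof.
move=> hL.
pose C := (B^C)%MS.
have rC : (\rank C <= d)%N by rewrite mxrank_compl; lia.
pose E : 'M[F]_(d, L) := pid_mx (\rank C) *m row_ebase C.
exists E=> v.
apply: submx_trans (submx_full v (addsmx_compl_full B)) _.
apply: addsmxS=> //.
rewrite -/C -{1}(mulmx_ebase C) -mulmxA.
have -> : (pid_mx (\rank C) : 'M[F]_L) = (pid_mx (\rank C) : 'M[F]_(L, d)) *m (pid_mx (\rank C) : 'M[F]_(d, L)).
  rewrite mul_pid_mx minnn; congr pid_mx.
  by apply/esym/minn_idPr.
by rewrite -!mulmxA mulmxA submxMl.
Qed.

Lemma chain_eq (r : nat -> nat) L d :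
  (forall j, (r j.+1 <= r j)%N) -> (r 0 <= L)%N -> (L <= r d.+1 + d)%N ->
  exists j, (j <= d)%N /\ r j.+1 = r j.
Proof.
move=> dec h0 hL.
have : forall m, (exists j, (j < m)%N /\ r j.+1 = r j) \/ (r m + m <= r 0)%N.
  elim=> [|m [[j [hj E]]|IH]]; first by right; rewrite addn0.
  - by left; exists j; split=> //; apply: ltnW.
  - case: (ltngtP (r m.+1) (r m))=> h.
    + by right; rewrite addnS; apply: leq_trans IH; rewrite ltn_add2r.
    + by have := dec m; rewrite leqNgt h.
    + by left; exists m.
move=> /(_ d.+1) [[j [hj E]]|H]; first by exists j.
by have := leq_trans H h0; move: hL; lia.
Qed.

Section Trunc.
Variables (K : fieldType) (s n d : nat).
Implicit Types v w : 'rV[ser K s]_n.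
Definition Ix := ('I_n * {ffun 'I_s -> 'I_d.+1})%type.
Definition trunc (v : 'rV[ser K s]_n) : 'rV[K]_#|{: Ix}| :=
  \row_k v 0 (enum_val k).1 (ofb (enum_val k).2).
Definition boxed (a : mon s) := [forall l, (a l <= d)%N].
Definition lft (y : 'rV[K]_#|{: Ix}|) : 'rV[ser K s]_n :=
  \row_i (fun a => if boxed a then y 0 (enum_rank ((i, boxof d a) : Ix)) else 0).

Lemma boxed_ofb (b : {ffun 'I_s -> 'I_d.+1}) : boxed (ofb b).
Proof. by apply/forallP=> l; rewrite ffunE -ltnS. Qed.

Lemma trunc_lft y : trunc (lft y) = y.
Proof.
apply/rowP=> k; rewrite !mxE boxed_ofb boxof_ofb.
by case: (enum_val k) (enum_valK k) => i b /= ->.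
Qed.

Lemma truncD v w : trunc (v + w) = trunc v + trunc w.
Proof. by apply/rowP=> k; rewrite !mxE. Qed.
Lemma truncN v : trunc (- v) = - trunc v.
Proof. by apply/rowP=> k; rewrite !mxE. Qed.
Lemma truncB v w : trunc (v - w) = trunc v - trunc w.
Proof. by rewrite truncD truncN. Qed.
Lemma trunc0 : trunc 0 = 0.
Proof. by apply/rowP=> k; rewrite !mxE. Qed.
Lemma truncZ c v : trunc (cst c *: v) = c *: trunc v.
Proof. by apply/rowP=> k; rewrite !mxE mul_cst. Qed.
Lemma trunc_sum (I : Type) (r : seq I) (F : I -> 'rV_n) :
  trunc (\sum_(i <- r) F i) = \sum_(i <- r) trunc (F i).
Proof. by elim/big_rec2: _ => [|i y1 y2 _ <-]; rewrite ?trunc0 ?truncD. Qed.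

Lemma trunc_comb k (M : 'M[K]_(k, #|{: Ix}|)) (w : 'I_k -> 'rV_n) x :
  (forall r, row r M = trunc (w r)) ->
  x *m M = trunc (\sum_r cst (x 0 r) *: w r).
Proof.
move=> hw; rewrite mulmx_sum_row trunc_sum; apply: eq_bigr=> r _.
by rewrite truncZ hw.
Qed.

Lemma inmD j v w : inm j v -> inm j w -> inm j (v + w).
Proof. by move=> hv hw i a ha; rewrite mxE serD hv ?hw ?addr0. Qed.
Lemma inmN j v : inm j v -> inm j (- v).
Proof. by move=> hv i a ha; rewrite mxE serN hv ?oppr0. Qed.
Lemma inm_le j j' v : (j' <= j)%N -> inm j v -> inm j' v.
Proof. by move=> hj hv i a ha; apply: hv; apply: leq_trans ha hj. Qed.

Lemma trunc0_inm v : trunc v = 0 -> inm d.+1 v.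
Proof.
move=> hv i a ha.
have hb : boxed a by apply/forallP=> l; apply: leq_trans (le_mdeg a l) _; rewrite -ltnS.
move/rowP: hv => /(_ (enum_rank ((i, boxof d a) : Ix))).
rewrite !mxE enum_rankK /= ofb_boxof //.
by move=> l; apply: (forallP hb).
Qed.

Lemma inm_lft j (y : 'rV[K]_#|{: Ix}|) : (forall k : 'I_#|{: Ix}|, (mdeg (ofb (enum_val k).2) < j)%N -> y 0 k = 0) ->
  inm j (lft y).
Proof.
move=> hy i a ha; rewrite mxE; case: ifP=> // hb; apply: hy.
rewrite enum_rankK /= ofb_boxof //; by move=> l; apply: (forallP hb).
Qed.

Definition Mj (j : nat) : 'M[K]_#|{: Ix}| :=
  diag_mx (\row_k (if (j <= mdeg (ofb (enum_val k).2))%N then 1 else 0)).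

Lemma MjS j : (Mj j.+1 <= Mj j)%MS.
Proof.
have -> : Mj j.+1 = Mj j.+1 *m Mj j.
  apply/matrixP=> k k'; rewrite mul_mx_diag !mxE.
  case: eqP=> [->|]; last by rewrite !mul0r.
  case: ifP=> h; last by rewrite !mul0r.
  by rewrite ifT ?mulr1 // ltnW.
exact: submxMl.
Qed.

Lemma trunc_hm j (p : 'I_n * {ffun 'I_s -> 'I_j.+1}) : (j <= d)%N ->
  mdeg (ofb p.2) = j ->
  trunc (@hm K s n j p) = delta_mx 0 (enum_rank ((p.1, boxof d (ofb p.2)) : Ix)).
Proof.
move=> hjd hdeg; case: p hdeg=> i b /= hdeg.
have hbx : forall l, (ofb b l <= d)%N.
  by move=> l; apply: leq_trans hjd; apply: leq_trans (le_mdeg _ l) _; rewrite hdeg.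
apply/rowP=> k; rewrite /hm /= hdeg eqxx !mxE eqxx /=.
rewrite -(inj_eq enum_val_inj) enum_rankK.
case: (enum_val k)=> i2 b2 /=.
rewrite xpair_eqE mulrC; case: eqP=> [E|ne]; [subst i2|]; rewrite /=.
  rewrite mul1r /xm.
  case: eqP=> [E|nb]; first by rewrite -E boxof_ofb eqxx.
  by case: eqP=> // E; case: nb; rewrite E ofb_boxof.
by rewrite mul0r.
Qed.
End Trunc.

Lemma fiber_span (K : fieldType) s n d (S : 'rV[ser K s]_n -> Prop)
  (S0 : S 0) (SD : forall x y, S x -> S y -> S (x + y))
  (SZ : forall r x, S x -> S (r *: x))
  k0 (B0 : 'M[K]_(k0, #|{: Ix s n d}|)) :
  (forall r, exists v, S v /\ row r B0 = trunc d v) ->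
  (#|{: Ix s n d}| <= \rank B0 + d)%N ->
  exists e : 'I_d -> 'rV[ser K s]_n, forall g, exists c : 'I_d -> K,
    S (g - \sum_j cst (c j) *: e j).
Proof.
move=> HB0 hrank.
pose T := @trunc K s n d.
have Ssum : forall (J : Type) (q : seq J) (F : J -> 'rV_n), (forall j, S (F j)) ->
    S (\sum_(j <- q) F j).
  by move=> J q F HF; elim/big_ind: _ => //.
have [kt [Bt [HBt1 _ HBt2]]] := span_family (fun y => exists v, S v /\ y = T v).
have [wt hwt] := boolp.choice HBt1.
pose comb (x : 'rV[K]_kt) := \sum_r cst (x 0 r) *: wt r.
have Scomb : forall x, S (comb x).
  by move=> x; apply: Ssum=> r; apply: SZ; case: (hwt r).
have combE : forall x, x *m Bt = T (comb x).
  by move=> x; apply: trunc_comb=> r; case: (hwt r).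
have rkt : (#|{: Ix s n d}| <= \rank Bt + d)%N.
  apply: leq_trans hrank _; rewrite leq_add2r; apply: mxrankS.
  by apply/row_subP=> r; have [v [Sv ->]] := HB0 r; apply: HBt2; exists v.
pose W j := (Bt + Mj K s n d j)%MS.
have [j [hjd eqW]] : exists j, (j <= d)%N /\ \rank (W j.+1) = \rank (W j).
  apply: (@chain_eq (fun j => \rank (W j)) #|{: Ix s n d}|).
  - by move=> j; apply: mxrankS; apply: addsmxS=> //; apply: MjS.
  - exact: rank_leq_col.
  - apply: leq_trans rkt _; rewrite leq_add2r; apply: mxrankS; exact: addsmxSl.
have subW : (W j <= W j.+1)%MS.
  have H : (W j.+1 <= W j)%MS by apply: addsmxS=> //; apply: MjS.
  by have := (mxrank_leqif_sup H).2; rewrite eqW eqxx.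
have rel : forall p : 'I_n * {ffun 'I_s -> 'I_j.+1},
    exists nr : 'rV[ser K s]_n * ('I_n * {ffun 'I_s -> 'I_j.+1} -> ser K s),
    [/\ S nr.1, forall q, ct (nr.2 q) = 0 &
        hm K p = nr.1 + \sum_q nr.2 q *: hm K q].
  move=> p; case: (boolP (mdeg (ofb p.2) == j))=> hp; last first.
    exists (0, fun _ => 0); split=> //=.
    by rewrite /hm ifN // add0r big1 // => q _; rewrite scale0r.
  pose k := enum_rank ((p.1, boxof d (ofb p.2)) : Ix s n d).
  have hk : ((delta_mx 0 k : 'rV[K]_#|{: Ix s n d}|) <= W j.+1)%MS.
    apply: (submx_trans _ subW); apply: (submx_trans _ (addsmxSr Bt _)).
    have <- : row k (Mj K s n d j) = delta_mx 0 k.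
      by rewrite row_diag_mx mxE enum_rankK /= ofb_boxof ?(eqP hp) ?leqnn ?scale1r //;
        move=> l; apply: leq_trans hjd; apply: leq_trans (le_mdeg _ l) _; rewrite (eqP hp).
    exact: row_sub.
  have [[x y] /= hxy] := sub_addsmxP hk.
  pose mu' := lft (y *m Mj K s n d j.+1).
  have imu' : inm j.+1 mu'.
    apply: inm_lft=> k' hk'; rewrite mul_mx_diag !mxE ifN ?mulr0 //.
    by rewrite -ltnNge.
  pose rest := hm K p - comb x - mu'.
  have Trest : T rest = 0.
    rewrite /T /rest !truncB trunc_hm ?(eqP hp) // trunc_lft -/T -combE.
    rewrite -/k hxy; set X := x *m Bt; set Y := y *m _.
    by apply/rowP=> i; rewrite !mxE; ring.
  have irest : inm j.+1 rest by apply: inm_le (trunc0_inm Trest); rewrite ltnS.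
  have hmu : inm (j + 1) (mu' + rest) by rewrite addn1; apply: inmD.
  have [q [hq0 hqE]] := @decomp K s n j 1 (mu' + rest) hmu.
  exists (comb x, q); split=> //=.
    by move=> q'; apply: hq0; rewrite /mdeg big1 // => i _; rewrite ffunE.
  transitivity (comb x + (mu' + rest)); last exact: (congr1 (fun z => comb x + z) hqE).
  rewrite /rest; apply/rowP=> i; rewrite !mxE; ring.
have [F hF] := boolp.choice rel.
have Shm : forall p : 'I_n * {ffun 'I_s -> 'I_j.+1}, S (hm K p).
  apply: (@nakayama K s n S S0 SD SZ _ (@hm K s n j) (fun p => (F p).1) (fun p q => (F p).2 q)).
  - by move=> p q; case: (hF p).
  - by move=> p; case: (hF p).
  - by move=> p; case: (hF p).
have inmS : forall v, inm j v -> S v.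
  move=> v hv; have hv' : inm (j + 0) v by rewrite addn0.
  have [q [_ ->]] := @decomp K s n j 0 v hv'.
  by apply: Ssum=> p; apply: SZ.
have [E hE] := compl_rows rkt.
exists (fun jj => lft (row jj E))=> g.
have [[x c] /= hg] := sub_addsmxP (hE (T g)).
exists (fun jj => c 0 jj).
have cE : c *m E = T (\sum_jj cst (c 0 jj) *: lft (row jj E)).
  by apply: trunc_comb=> r; rewrite trunc_lft.
pose rest := g - \sum_jj cst (c 0 jj) *: lft (row jj E) - comb x.
have Trest : T rest = 0.
  rewrite /T /rest !truncB -/T -cE -combE hg.
  by apply/rowP=> i; rewrite !mxE; ring.
have : S (comb x + rest).
  apply: SD=> //; apply: inmS; apply: inm_le (trunc0_inm Trest).
  by apply: leq_trans hjd _.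
congr S; rewrite /rest; apply/rowP=> i; rewrite !mxE; ring.
Qed.

Section Bridge.
Variables (K : fieldType) (s n : nat).

Lemma mps_mulE (f g : mps K s) : mps_mul f g = ((f : ser {poly K} s) * g).
Proof.
apply: funext=> a; rewrite serM /mps_mul /lowers big_map big_filter.
rewrite big_enum_cond; apply: eq_big=> // b.
by move=> _; congr (f _ * g _); apply/ffunP=> i; rewrite !ffunE.

Qed.

Definition ev (t0 : K) (f : mps K s) : ser K s := fun a => (f a).[t0].
Definition liftc (r : ser K s) : mps K s := fun a => (r a)%:P.
Definition evv (t0 : K) (w : 'I_n -> mps K s) : 'rV[ser K s]_n := \row_i ev t0 (w i).

Lemma evM t0 (f g : mps K s) : ev t0 (mps_mul f g) = ev t0 f * ev t0 g.
Proof.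
apply: funext=> a; rewrite mps_mulE /ev serM serM horner_sum.
by apply: eq_bigr=> b _; rewrite hornerM.
Qed.
Lemma ev_liftc t0 r : ev t0 (liftc r) = r.
Proof. by apply: funext=> a; rewrite /ev /liftc hornerC. Qed.

Lemma evv_add t0 u v : evv t0 (vadd u v) = evv t0 u + evv t0 v.
Proof. by apply/rowP=> i; rewrite !mxE; apply: funext=> a; rewrite /ev serD hornerD. Qed.
Lemma evv_zero t0 : evv t0 (@vzero K s n) = 0.
Proof. by apply/rowP=> i; rewrite !mxE; apply: funext=> a; rewrite /ev ser0 horner0. Qed.
Lemma evv_polyscale t0 c u : evv t0 (vpolyscale c%:P u) = cst c *: evv t0 u.
Proof.
apply/rowP=> i; rewrite !mxE; apply: funext=> a.
by rewrite mul_cst /ev /vpolyscale /mps_polyscale hornerCM.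
Qed.
Lemma evv_opp t0 u : evv t0 (vpolyscale (-1) u) = - evv t0 u.
Proof.
apply/rowP=> i; rewrite !mxE; apply: funext=> a.
by rewrite /ev serN /vpolyscale /mps_polyscale hornerM hornerN hornerC mulN1r.
Qed.
Lemma evv_big t0 d (F : 'I_d -> 'I_n -> mps K s) :
  evv t0 (\big[@vadd K s n/@vzero K s n]_(j < d) F j) = \sum_(j < d) evv t0 (F j).
Proof. by apply: (big_morph (evv t0) (evv_add t0) (evv_zero t0)). Qed.

Variable N : ('I_n -> mps K s) -> Prop.
Hypothesis HN : is_submodule N.

Definition Nt (t0 : K) (v : 'rV[ser K s]_n) := exists u, N u /\ v = evv t0 u.

Lemma Nt0 t0 : Nt t0 0.
Proof. by case: HN=> H0 _ _; exists (@vzero K s n); rewrite evv_zero. Qed.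
Lemma NtD t0 x y : Nt t0 x -> Nt t0 y -> Nt t0 (x + y).
Proof.
case: HN=> _ HD _ [u [Nu ->]] [v [Nv ->]].
by exists (vadd u v); rewrite evv_add; split=> //; apply: HD.
Qed.
Lemma NtZ t0 (r : ser K s) x : Nt t0 x -> Nt t0 (r *: x).
Proof.
case: HN=> _ _ HZ [u [Nu ->]].
exists (vscale (liftc r) u); split; first exact: HZ.
by apply/rowP=> i; rewrite !mxE /vscale evM ev_liftc.
Qed.

Lemma fiberE t0 w : in_fiber_kernel N t0 w <-> Nt t0 (evv t0 w).
Proof.
split.
  case=> u [v [Nu ->]]; exists u; split=> //.
  rewrite evv_add; apply/rowP=> i; rewrite !mxE; apply: funext=> a.
  rewrite /ev serD /vpolyscale /mps_polyscale hornerM hornerXsubC subrr mul0r addr0.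
  by [].
case=> u [Nu E].
exists u, (fun i a => (w i a - u i a) %/ ('X - t0%:P)); split=> //.
apply: funext=> i; apply: funext=> a.
rewrite /vadd /mps_add /vpolyscale /mps_polyscale mulrC divpK; first by rewrite addrC subrK.
rewrite -root_factor_theorem /root hornerD hornerN.
move/rowP: E => /(_ i); rewrite !mxE => /(congr1 (fun f => f a)); rewrite /ev=> ->.
by rewrite subrr.
Qed.

Lemma dimE_at t0 d : dimK_fiber_le N t0 d ->
  exists e : 'I_d -> 'rV[ser K s]_n, forall g, exists c : 'I_d -> K,
    Nt t0 (g - \sum_j cst (c j) *: e j).
Proof.
case=> e He; exists (fun j => evv t0 (e j))=> g.
have [c hc] := He (fun i => liftc (g 0 i)); exists c.
move/fiberE: hc; rewrite evv_add evv_opp evv_big.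
have -> : evv t0 (fun i => liftc (g 0 i)) = g.
  by apply/rowP=> i; rewrite mxE ev_liftc.
by under eq_bigr do rewrite evv_polyscale.
Qed.

Lemma dimE_to t0 d : (exists e : 'I_d -> 'rV[ser K s]_n, forall g, exists c : 'I_d -> K,
    Nt t0 (g - \sum_j cst (c j) *: e j)) -> dimK_fiber_le N t0 d.
Proof.
case=> e He; exists (fun j i => liftc (e j 0 i))=> w.
have [c hc] := He (evv t0 w); exists c.
apply/fiberE; rewrite evv_add evv_opp evv_big.
under eq_bigr do rewrite evv_polyscale.
have E : forall j, evv t0 (fun i => liftc (e j 0 i)) = e j.
  by move=> j; apply/rowP=> i; rewrite mxE ev_liftc.
by under eq_bigr do rewrite E.
Qed.
End Bridge.

Lemma roots_seq (K : fieldType) (p : {poly K}) : p != 0 ->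
  exists S : seq K, forall x, root p x = (x \in S).
Proof.
move: {2}(size p) (leqnn (size p))=> m; elim: m p=> [|m IH] p hs hp.
  by move: hp; rewrite -size_poly_eq0; move: hs; rewrite leqn0=> ->.
case: (pselect (exists a, root p a))=> [[a ha]|hn]; last first.
  exists [::]=> x; rewrite in_nil; apply/negP=> hx; apply: hn; by exists x.
have dv : ('X - a%:P) %| p by rewrite -root_factor_theorem.
pose q := p %/ ('X - a%:P).
have pE : p = q * ('X - a%:P) by rewrite divpK.
have hq : q != 0 by apply: contraNneq hp; rewrite pE=> ->; rewrite mul0r.
have sq : (size q <= m)%N.
  move: hs; rewrite pE size_Mmonic ?monicXsubC // size_XsubC addn2 /=.
  by rewrite ltnS.
have [S hS] := IH q sq hq.
exists (a :: S)=> x; rewrite pE rootM root_XsubC hS in_cons orbC.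
by [].
Qed.

Theorem mainTheorem6 (K : fieldType) (s n : nat)
  (N : ('I_n -> mps K s) -> Prop) (HN : is_submodule N) (o : K) (d : nat) :
  dimK_fiber_le N o d ->
  exists U : K -> Prop,
    [/\ zariski_open_A1 U, U o &
        forall t0 : K, U t0 -> dimK_fiber_le N t0 d].
Proof.
move=> Hdim.
have [e He] := dimE_at Hdim.
pose L := #|{: Ix s n d}|.
have [k0 [Bo [HBo1 fBo HBo2]]] :=
  span_family (fun y : 'rV[K]_L => exists v, Nt N o v /\ y = trunc d v).
pose E' : 'M[K]_(d, L) := \matrix_(j, k) trunc d (e j) 0 k.
have full : (1%:M <= Bo + E')%MS.
  apply/row_subP=> k; rewrite row1.
  have [c hc] := He (lft (delta_mx 0 k : 'rV[K]_L)).
  have hB : (trunc d (lft (delta_mx 0 k : 'rV[K]_L) - \sum_j cst (c j) *: e j) <= Bo)%MS.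
    by apply: HBo2; exists (lft (delta_mx 0 k : 'rV[K]_L) - \sum_j cst (c j) *: e j).
  have [x hx] := submxP hB.
  apply/sub_addsmxP; exists (x, \row_j c j)=> /=.
  rewrite -hx truncB trunc_lft trunc_sum mulmx_sum_row.
  have -> : \sum_(i < d) trunc d (cst (c i) *: e i) = \sum_i (\row_j c j) 0 i *: row i E'.
    apply: eq_bigr=> i _; rewrite truncZ mxE; congr (_ *: _).
    by apply/rowP=> k'; rewrite !mxE.
  by rewrite subrK.
have rkBo : (L <= \rank Bo + d)%N.
  have := mxrankS full; rewrite mxrank1=> h.
  apply: leq_trans h _; case: (mxrank_adds_leqif Bo E')=> h _.
  by apply: leq_trans h _; rewrite leq_add2l rank_leq_row.
have HU : forall r, exists u, N u /\ row r Bo = trunc d (evv o u).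
  move=> r; have [v [[u [Nu ->]] E]] := HBo1 r; by exists u.
have [Uf hUf] := boolp.choice HU.
pose BP : 'M[{poly K}]_(k0, L) := \matrix_(r, k) Uf r (enum_val k).1 (ofb (enum_val k).2).
pose Bt t0 := map_mx (horner_eval t0) BP.
have rowBt : forall t0 r, row r (Bt t0) = trunc d (evv t0 (Uf r)).
  by move=> t0 r; apply/rowP=> k; rewrite !mxE horner_evalE.
have BtoE : Bt o = Bo.
  apply/row_matrixP=> r; rewrite rowBt; by case: (hUf r).
have [Cm hC] := row_freeP fBo.
pose p := \det (BP *m map_mx polyC Cm).
have pE : forall t0, p.[t0] = \det (Bt t0 *m Cm).
  move=> t0; rewrite -horner_evalE /p -det_map_mx map_mxM; congr (\det (_ *m _)).
  by apply/matrixP=> i j; rewrite !mxE /= ?horner_evalE hornerC.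
have po : p.[o] = 1 by rewrite pE BtoE hC det1.
have pn0 : p != 0 by apply/eqP=> h; move: po; rewrite h horner0=> /eqP; rewrite eq_sym oner_eq0.
have [S hS] := roots_seq pn0.
exists (fun x => x \notin S); split.
- by right; exists S.
- by rewrite -hS /root po oner_neq0.
move=> t0 ht0.
have pt : p.[t0] != 0 by move: ht0; rewrite -hS.
have uni : (Bt t0 *m Cm) \in unitmx by rewrite unitmxE unitfE -pE.
have rk : (k0 <= \rank (Bt t0))%N.
  by have := mxrankM_maxl (Bt t0) Cm; rewrite (mxrank_unit uni).
apply: dimE_to.
apply: (@fiber_span K s n d (Nt N t0) (Nt0 HN t0) (@NtD _ _ _ _ HN t0)
                    (@NtZ _ _ _ _ HN t0) k0 (Bt t0)).
  by move=> r; exists (evv t0 (Uf r)); split; [exists (Uf r); case: (hUf r) | exact: rowBt].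
by apply: leq_trans rkBo _; rewrite leq_add2r (eqP fBo).
Qed.
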